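(* Let $n\ge1$, $\preceq$ an admissible order on $L([0,1])$, $G\colon L([0,1])^n\to L([0,1])$ non-decreasing and $F\colon L([0,1])^2\to L([0,1])$ non-decreasing in the first variable. Then the IV Sugeno-like $FG$-functional $\mathbf S_m^{F,G}$ is non-decreasing (in each argument, w.r.t. $\preceq$) for every symmetric IV fuzzy measure $m$.
   Context: $N=\{1,\dots,n\}$. $L([0,1])=\{[a,b]:0\le a\le b\le1\}$, $\mathbf0=[0,0]$, $\mathbf1=[1,1]$. An admissible order $\preceq$ is a total order on $L([0,1])$ with $[a,b]\preceq[c,d]$ whenever $a\le c$, $b\le d$. All monotonicity is w.r.t. $\preceq$ (for $G$, in each argument). An IV fuzzy measure w.r.t. $\preceq$ is $m\colon2^N\to L([0,1])$, $m(\emptyset)=\mathbf0$, $m(N)=\mathbf1$, $m(A)\preceq m(B)$ for $A\subseteq B$; symmetric if $m(A)=m(B)$ whenever $|A|=|B|$. For a permutation $\sigma$, $E_{\sigma(i)}=\{\sigma(i),\dots,\sigma(n)\}$. $\mathbf S_m^{F,G}(X_1,\dots,X_n)=G\big(F(X_{\sigma(1)},m(E_{\sigma(1)})),\dots,F(X_{\sigma(n)},m(E_{\sigma(n)}))\big)$ with $\sigma$ any permutation such that $X_{\sigma(1)}\preceq\dots\preceq X_{\sigma(n)}$ (independent of the choice of $\sigma$ for symmetric $m$). *)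

(* Defs.v *)
From mathcomp Require Import all_boot all_order fingroup perm all_algebra.
From mathcomp Require Import reals.
Set Implicit Arguments. Unset Strict Implicit. Unset Printing Implicit Defensive.
Import Order.TTheory GRing.Theory Num.Theory.
Local Open Scope ring_scope.

Section IV.
Variable R : realType.

Record IV := mkIV { lo : R; hi : R;
  IV_ok : (0 <= lo) && (lo <= hi) && (hi <= 1) }.

Lemma iv0_ok : (0 <= (0:R)) && ((0:R) <= 0) && ((0:R) <= 1).
Proof. by rewrite lexx ler01. Qed.
Lemma iv1_ok : (0 <= (1:R)) && ((1:R) <= 1) && ((1:R) <= 1).
Proof. by rewrite lexx ler01. Qed.

Definition iv0 : IV := mkIV iv0_ok.
Definition iv1 : IV := mkIV iv1_ok.

Definition admissible (le : rel IV) : Prop :=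
  [/\ reflexive le, antisymmetric le, transitive le, total le &
      forall x y, lo x <= lo y -> hi x <= hi y -> le x y].

Variable n : nat.

Definition upd (x : 'I_n -> IV) (i : 'I_n) (a : IV) : 'I_n -> IV :=
  fun j => if j == i then a else x j.

Definition nondecr_each (le : rel IV) (H : ('I_n -> IV) -> IV) : Prop :=
  forall x i a, le (x i) a -> le (H x) (H (upd x i a)).

Definition nondecr_first (le : rel IV) (F : IV -> IV -> IV) : Prop :=
  forall x y z, le x y -> le (F x z) (F y z).

Definition IV_fuzzy_measure (le : rel IV) (m : {set 'I_n} -> IV) : Prop :=
  [/\ m set0 = iv0, m setT = iv1 &
      forall A B : {set 'I_n}, A \subset B -> le (m A) (m B)].

Definition symmetric_measure (m : {set 'I_n} -> IV) : Prop :=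
  forall A B : {set 'I_n}, #|A| = #|B| -> m A = m B.

Definition sorting (le : rel IV) (X : 'I_n -> IV) (s : {perm 'I_n}) : bool :=
  [forall i : 'I_n, forall j : 'I_n, (i <= j)%N ==> le (X (s i)) (X (s j))].

Definition Eset (s : {perm 'I_n}) (i : 'I_n) : {set 'I_n} :=
  [set s k | k in [pred k : 'I_n | (i <= k)%N]].

Definition sort_perm (le : rel IV) (X : 'I_n -> IV) : {perm 'I_n} :=
  odflt 1%g [pick s | sorting le X s].

Definition SFG (le : rel IV) (m : {set 'I_n} -> IV) (F : IV -> IV -> IV)
    (G : ('I_n -> IV) -> IV) (X : 'I_n -> IV) : IV :=
  let s := sort_perm le X in G (fun i => F (X (s i)) (m (Eset s i))).

End IV.

(* Main.v *)
Require Import Defs.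
From mathcomp Require Import all_boot all_order fingroup perm all_algebra.
From mathcomp Require Import reals.
From Stdlib Require Import FunctionalExtensionality.
Set Implicit Arguments. Unset Strict Implicit. Unset Printing Implicit Defensive.

Section S.
Variables (R : realType) (n : nat) (le : rel (IV R)).
Hypothesis adm : admissible le.

Lemma sorting_exists (x0 : 'I_n) (X : 'I_n -> IV R) : exists s, sorting le X s.
Proof.
case: adm => refl _ tr tot _.
pose r := fun i j : 'I_n => le (X i) (X j).
have rtot : total r by move=> i j; apply: tot.
have rtr : transitive r by move=> i j k; apply: tr.
have rrefl : reflexive r by move=> i; apply: refl.
pose srt := sort r (enum 'I_n).
have Hsz : size srt = n by rewrite size_sort size_enum_ord.
have Hu : uniq srt by rewrite sort_uniq enum_uniq.
pose f := fun k : 'I_n => nth x0 srt k.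
have finj : injective f.
  move=> a b; rewrite /f => /eqP; rewrite nth_uniq ?Hsz // => /eqP; exact: val_inj.
exists (perm finj); apply/forallP => i; apply/forallP => j; apply/implyP => hij.
rewrite !permE /f.
apply: (sorted_leq_nth rtr rrefl x0 (sort_sorted rtot _)) => //; by rewrite inE Hsz ltn_ord.
Qed.

Lemma G_mono (G : ('I_n -> IV R) -> IV R) : nondecr_each le G ->
  forall u v : 'I_n -> IV R, (forall k, le (u k) (v k)) -> le (G u) (G v).
Proof.
case: adm => refl _ tr _ _ HG u v Huv.
pose w j := fun k : 'I_n => if (k < j)%N then v k else u k.
have H : forall j, le (G u) (G (w j)).
  elim=> [|j IH].
    have -> : w 0%N = u by apply: functional_extensionality => k.
    exact: refl.
  case: (ltnP j n) => hj.
    pose o := Ordinal hj.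
    have -> : w j.+1 = upd (w j) o (v o).
      apply: functional_extensionality => k; rewrite /w /upd ltnS leq_eqVlt.
      case: (eqVneq k o) => [->|hk] /=; first by rewrite eqxx.
      have : (nat_of_ord k != j) by apply: contra hk => /eqP hk; apply/eqP/val_inj.
      by move/negbTE => ->.
    apply: tr IH _; apply: HG; rewrite /w /= ltnn; exact: Huv.
  have -> : w j.+1 = w j; last exact: IH.
  apply: functional_extensionality => k; rewrite /w.
  have h1 : (k < j)%N by apply: leq_trans (ltn_ord k) hj.
  by rewrite h1 ltnW.
have -> : v = w n by apply: functional_extensionality => k; rewrite /w ltn_ord.
exact: H.
Qed.

Lemma sorted_mono (X Y : 'I_n -> IV R) (s s' : {perm 'I_n}) :
  (forall j, le (X j) (Y j)) -> sorting le X s -> sorting le Y s' ->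
  forall k, le (X (s k)) (Y (s' k)).
Proof.
case: adm => refl _ tr tot _ HXY /forallP Hs /forallP Hs' k.
apply/negPn/negP => Hn.
pose P := [set p : 'I_n | (p <= k)%N].
pose Q := [set p : 'I_n | (p < k)%N].
have HQP : Q \proper P.
  apply/properP; split.
    by apply/subsetP => p; rewrite !inE => /ltnW.
  by exists k; rewrite !inE ?leqnn ?ltnn.
have Hsub : s' @: P \subset s @: Q.
  apply/subsetP => j /imsetP [p]; rewrite inE => hp ->.
  apply/imsetP; exists (s^-1 (s' p))%g; last by rewrite permKV.
  rewrite inE ltnNge; apply/negP => hk.
  have h1 : le (X (s k)) (X (s' p)).
    by move: (Hs k) => /forallP /(_ (s^-1 (s' p))%g) /implyP /(_ hk); rewrite permKV.
  apply: (negP Hn); apply: (tr _ _ _ h1); apply: (tr _ _ _ (HXY _)).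
  by move: (Hs' p) => /forallP /(_ k) /implyP /(_ hp).
have := subset_leq_card Hsub; rewrite !card_imset; try exact: perm_inj.
by rewrite leqNgt (proper_card HQP).
Qed.

Lemma card_Eset (s s' : {perm 'I_n}) k : #|Eset s k| = #|Eset s' k|.
Proof. by rewrite /Eset !card_imset //; exact: perm_inj. Qed.

End S.

Unset Implicit Arguments.
Theorem proposition12 (R : realType) (n : nat) (le : rel (IV R))
  (F : IV R -> IV R -> IV R) (G : ('I_n -> IV R) -> IV R) :
  (0 < n)%N ->
  admissible le ->
  nondecr_each le G ->
  nondecr_first le F ->
  forall m : {set 'I_n} -> IV R,
    IV_fuzzy_measure le m -> symmetric_measure m ->
    nondecr_each le (SFG le m F G).
Proof.
move=> n0 adm HG HF m _ Hsym X i a Hia.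
have x0 : 'I_n := Ordinal n0.
have Hsort : forall Y : 'I_n -> IV R, sorting le Y (sort_perm le Y).
  move=> Y; rewrite /sort_perm; case: (pickP (fun s => sorting le Y s)) => [s -> //|H].
  have [s Hs] := sorting_exists adm x0 Y.
  by rewrite H in Hs.
rewrite /SFG; apply: (G_mono adm HG) => k.
rewrite (Hsym (Eset _ k) (Eset (sort_perm le X) k)); last exact: card_Eset.
apply: HF; apply: (sorted_mono adm) (Hsort _) (Hsort _) _.
case: adm => refl _ _ _ _.
move=> j; rewrite /upd; case: (eqVneq j i) => [->|_] //.
Qed.
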